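(* Let $H$ be a separated labeled hypergraph and let $H'$ be a minor of $H$. If $\mathcal A[H']\neq k[H']$, then $\mathcal A[H]\neq k[H]$.
   Context: Let $k$ be a field and $S=k[x_1,\dots,x_n,y]$. For an integral convex polytope $\mathcal P\subseteq\mathbb R^n_{\ge 0}$, the Ehrhart ring $\mathcal A[\mathcal P]$ is the $k$-subspace of $S$ spanned by the monomials $x^{\mathbf a}y^t$ with $t\in\mathbb N$, $\mathbf a\in t\mathcal P\cap\mathbb Z^n$; the polytopal ring is $k[\mathcal P]=k[x^{\mathbf a}y:\mathbf a\in\mathcal P\cap\mathbb Z^n]$. A labeled hypergraph $H=(V,f)$ on a finite set $V$ with alphabet $\{x_1,\dots,x_n\}$ is a function $f:\{x_1,\dots,x_n\}\to\mathcal P(V)$; its edges are the nonempty sets in the image of $f$. $H$ is separated if for all distinct $v,w\in V$ there are edges $F,G$ with $v\in F\setminus G$, $w\in G\setminus F$. For separated $H$, let $x^{\mathbf a_v}=\prod_{x:\,v\in f(x)}x$ for $v\in V$, let $\mathcal P_H=\mathrm{conv}\{\mathbf a_v:v\in V\}$, and $\mathcal A[H]=\mathcal A[\mathcal P_H]$, $k[H]=k[\mathcal P_H]$. For $W\subseteq V$, the induced subhypergraph is $H|_W=(W,f_W)$ with $f_W(x)=f(x)\cap W$. The deletion of an edge $E$ from $H$ is $H\setminus E=H|_{V\setminus E}$. A minor of $H$ is a labeled hypergraph obtained from $H$ by a finite sequence of edge deletions. *)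

(* Defs.v *)
From HB Require Import structures.
From mathcomp Require Import all_boot all_order all_algebra.
Set Implicit Arguments. Unset Strict Implicit. Unset Printing Implicit Defensive.
Import Order.TTheory GRing.Theory Num.Theory.
Local Open Scope ring_scope.

(* Exponent of a monomial x^a y^t of S = k[x_1..x_n, y]. *)
Definition expo (n : nat) := ({ffun 'I_n -> nat} * nat)%type.

(* A labeled hypergraph with alphabet {x_1,...,x_n} on a vertex set is
   f : 'I_n -> {set V}; the induced subhypergraph on W : {set V} is
   H|_W = (W, fun i => f i :&: W).  We always work with such pairs (W, f);
   the hypergraph H itself is the case W = [set: V]. *)

(* x^{a_v} = prod_{x : v in f(x)} x, for the hypergraph (W, f|_W) *)
Definition avec (V : finType) (n : nat) (W : {set V}) (f : 'I_n -> {set V})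
  (v : V) (i : 'I_n) : nat := (v \in f i :&: W).

(* a lies in t * P_{H|_W} = t * conv{a_v : v in W}, a in Z^n (nonneg since
   P is in the nonneg orthant): a = sum_v lam_v a_v, lam >= 0, sum lam = t,
   with coefficients in the ordered field R. *)
Definition in_dilate (R : realFieldType) (V : finType) (n : nat)
  (W : {set V}) (f : 'I_n -> {set V}) (a : {ffun 'I_n -> nat}) (t : nat) : Prop :=
  exists lam : V -> R,
    [/\ forall v, 0 <= lam v,
        \sum_(v in W) lam v = t%:R
      & forall i, (a i)%:R = \sum_(v in W) lam v * (avec W f v i)%:R].

Definition ehrhart_mon (R : realFieldType) (V : finType) (n : nat)
  (W : {set V}) (f : 'I_n -> {set V}) (e : expo n) : Prop :=
  in_dilate R W f e.1 e.2.

Definition lattice_pt (R : realFieldType) (V : finType) (n : nat)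
  (W : {set V}) (f : 'I_n -> {set V}) (a : {ffun 'I_n -> nat}) : Prop :=
  in_dilate R W f a 1.

(* monomials of the polytopal ring k[H|_W] = k[x^a y : a in P cap Z^n]:
   products of t generators x^a y *)
Definition polytopal_mon (R : realFieldType) (V : finType) (n : nat)
  (W : {set V}) (f : 'I_n -> {set V}) (e : expo n) : Prop :=
  exists s : seq {ffun 'I_n -> nat},
    [/\ size s = e.2,
        forall x, x \in s -> lattice_pt R W f x
      & forall i, e.1 i = \sum_(x <- s) x i].

(* Elements of S (or of its completion) as coefficient functions. *)
Definition monomial (k : fieldType) (n : nat) (m : expo n) : expo n -> k :=
  fun e => (e == m)%:R.

Inductive kspan (k : fieldType) (n : nat) (M : expo n -> Prop) :
    (expo n -> k) -> Prop :=
| kspan0 : kspan M (fun _ => 0)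
| kspan_mon m : M m -> kspan M (monomial k m)
| kspan_comb (c : k) p q : kspan M p -> kspan M q ->
    kspan M (fun e => c * p e + q e)
| kspan_ext p q : (forall e, p e = q e) -> kspan M p -> kspan M q.

Definition ehrhart_ring (k : fieldType) (R : realFieldType) (V : finType)
  (n : nat) (W : {set V}) (f : 'I_n -> {set V}) : (expo n -> k) -> Prop :=
  kspan (ehrhart_mon R W f).

Definition polytopal_ring (k : fieldType) (R : realFieldType) (V : finType)
  (n : nat) (W : {set V}) (f : 'I_n -> {set V}) : (expo n -> k) -> Prop :=
  kspan (polytopal_mon R W f).

Definition subspace_neq (k : fieldType) (n : nat) (A B : (expo n -> k) -> Prop) :=
  exists p, ~ (A p <-> B p).

Definition separated (V : finType) (n : nat) (W : {set V}) (f : 'I_n -> {set V}) :=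
  forall v w, v \in W -> w \in W -> v != w ->
    exists i j, [/\ v \in f i :&: W, v \notin f j :&: W,
                    w \in f j :&: W & w \notin f i :&: W].

(* H|_W' is a minor of H|_W: finite sequence of edge deletions, where
   deleting the edge E = f i :&: W (nonempty) gives H|_(W :\: E). *)
Inductive is_minor (V : finType) (n : nat) (f : 'I_n -> {set V}) (W : {set V}) :
    {set V} -> Prop :=
| minor_refl : is_minor f W W
| minor_step W' i : is_minor f W W' -> f i :&: W' != set0 ->
    is_minor f W (W' :\: (f i :&: W')).

Arguments ehrhart_ring k R {V n} W f.
Arguments polytopal_ring k R {V n} W f.

(* Main.v *)
Require Import Defs.
From HB Require Import structures.
From mathcomp Require Import all_boot all_order all_algebra.
Set Implicit Arguments. Unset Strict Implicit. Unset Printing Implicit Defensive.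
Import Order.TTheory GRing.Theory Num.Theory.

Section Helpers.
Local Open Scope ring_scope.

Lemma kspan_mono (k : fieldType) n (M N : expo n -> Prop) (p : expo n -> k) :
  (forall e, M e -> N e) -> kspan M p -> kspan N p.
Proof.
move=> MN; elim=> [|m Mm|c p1 q1 _ H1 _ H2|p1 q1 E _ H].
- exact: kspan0.
- by apply: kspan_mon; apply: MN.
- exact: kspan_comb.
- exact: kspan_ext E H.
Qed.

Lemma kspan_supp (k : fieldType) n (M : expo n -> Prop) (p : expo n -> k) :
  kspan M p -> forall e, p e != 0 -> M e.
Proof.
elim=> [|m Mm|c p1 q1 _ H1 _ H2|p1 q1 E _ H] e.
- by rewrite eqxx.
- rewrite /monomial => nz; suff /eqP -> : e == m by [].
  by apply: contraNT nz => /negbTE ->.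
- case: (p1 e =P 0) => [->|/eqP]; first by rewrite mulr0 add0r; apply: H2.
  by move=> /H1.
- by rewrite -E; apply: H.
Qed.

Lemma kspan_proj (k : fieldType) n (M : expo n -> Prop) (P : pred (expo n))
   (p : expo n -> k) :
  kspan M p -> kspan (fun e => M e /\ P e) (fun e => if P e then p e else 0).
Proof.
elim=> [|m Mm|c p1 q1 _ H1 _ H2|p1 q1 E _ H].
- by apply: (kspan_ext (p := fun _ => 0)); [move=> e; case: (P e)|apply: kspan0].
- case Pm: (P m).
  + apply: (kspan_ext (p := monomial k m)); last by apply: kspan_mon.
    move=> e; rewrite /monomial; case: (e =P m) => [->|_]; first by rewrite Pm.
    by case: (P e).
  + apply: (kspan_ext (p := fun _ => 0)); last exact: kspan0.
    move=> e; rewrite /monomial; case: (e =P m) => [->|_]; first by rewrite Pm.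
    by case: (P e).
- apply: kspan_ext (kspan_comb c H1 H2) => e.
  by case: (P e); rewrite ?mulr0 ?addr0.
- by apply: kspan_ext H => e; rewrite E.
Qed.

Lemma transfer (k : fieldType) n (M1 M2 N1 N2 : expo n -> Prop) (P : pred (expo n))
  (p : expo n -> k) :
  (forall e, M2 e -> M1 e) -> (forall e, N2 e -> N1 e) ->
  (forall e, M1 e -> P e -> M2 e) -> (forall e, N1 e -> P e -> N2 e) ->
  (forall e, M2 e -> P e) -> (forall e, N2 e -> P e) ->
  (kspan M1 p <-> kspan N1 p) -> (kspan M2 p <-> kspan N2 p).
Proof.
move=> hM hN fM fN sM sN [A B]; split=> h.
- have /A h1 := kspan_mono hM h.
  have h2 := kspan_proj P h1.
  have h3 : kspan N2 (fun e => if P e then p e else 0).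
    by apply: kspan_mono h2 => e [] /fN.
  apply: kspan_ext h3 => e; case Pe: (P e) => //.
  case: (p e =P 0) => [//|/eqP/(kspan_supp h)/sM]; by rewrite Pe.
- have /B h1 := kspan_mono hN h.
  have h2 := kspan_proj P h1.
  have h3 : kspan M2 (fun e => if P e then p e else 0).
    by apply: kspan_mono h2 => e [] /fM.
  apply: kspan_ext h3 => e; case Pe: (P e) => //.
  case: (p e =P 0) => [//|/eqP/(kspan_supp h)/sN]; by rewrite Pe.
Qed.

Lemma sum_sub (R : realFieldType) (V : finType) (W W' : {set V}) (F : V -> R) :
  W' \subset W -> (forall v, v \in W -> v \notin W' -> F v = 0) ->
  \sum_(v in W) F v = \sum_(v in W') F v.
Proof.
move=> sW h; rewrite (bigID (mem W')) /= [X in _ + X]big1 ?addr0.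
  by apply: eq_bigl => v; rewrite andb_idl // => /(subsetP sW).
by move=> v /andP[]; apply: h.
Qed.

Lemma avec_sub (V : finType) n (W W' : {set V}) (f : 'I_n -> {set V}) v j :
  W' \subset W -> v \in W' -> avec W' f v j = avec W f v j.
Proof. by move=> sW vW; rewrite /avec !inE vW (subsetP sW _ vW). Qed.

Lemma dilate_mono (R : realFieldType) (V : finType) n (W W' : {set V})
  (f : 'I_n -> {set V}) (a : {ffun 'I_n -> nat}) (t : nat) :
  W' \subset W -> in_dilate R W' f a t -> in_dilate R W f a t.
Proof.
move=> sW [lam [h0 h1 h2]].
exists (fun v => if v \in W' then lam v else 0); split.
- by move=> v; case: ifP.
- rewrite (sum_sub sW); last by move=> v _ /negbTE ->.
  by rewrite -h1; apply: eq_bigr => v ->.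
- move=> j; rewrite (sum_sub sW); last by move=> v _ /negbTE ->; rewrite mul0r.
  by rewrite h2; apply: eq_bigr => v vW; rewrite vW (avec_sub _ _ sW vW).
Qed.

Lemma dilate_face (R : realFieldType) (V : finType) n (W : {set V})
  (f : 'I_n -> {set V}) (i : 'I_n) (a : {ffun 'I_n -> nat}) (t : nat) :
  a i = 0%N -> in_dilate R W f a t ->
  in_dilate R (W :\: (f i :&: W)) f a t.
Proof.
move=> ai [lam [h0 h1 h2]].
have sW : W :\: (f i :&: W) \subset W by apply: subsetDl.
have z : forall v, v \in W -> v \notin W :\: (f i :&: W) -> lam v = 0.
  move=> v vW; rewrite !inE vW /= !andbT => /negPn vf.
  have := h2 i; rewrite ai /= => /esym E.
  have := psumr_eq0P _ E vW.
  rewrite /avec !inE vf vW mulr1; apply.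
  by move=> u _; rewrite mulr_ge0.
exists lam; split => //.
- by rewrite -h1 (sum_sub sW).
- move=> j; rewrite h2 (sum_sub sW); last by move=> v vW /(z v vW) ->; rewrite mul0r.
  by apply: eq_bigr => v vW; rewrite (avec_sub _ _ sW vW).
Qed.

Lemma dilate_zero (R : realFieldType) (V : finType) n (W : {set V})
  (f : 'I_n -> {set V}) (i : 'I_n) (a : {ffun 'I_n -> nat}) (t : nat) :
  in_dilate R (W :\: (f i :&: W)) f a t -> a i = 0%N.
Proof.
move=> [lam [h0 h1 h2]]; apply/eqP; rewrite -(pnatr_eq0 R) h2.
apply/eqP; apply: big1 => v; rewrite /avec !inE => /andP[vn vW].
by move: vn; rewrite vW andbT => /negbTE ->; rewrite mulr0.
Qed.

Lemma step (k : fieldType) (R : realFieldType) (V : finType) (n : nat)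
  (f : 'I_n -> {set V}) (W : {set V}) i :
  subspace_neq (ehrhart_ring k R (W :\: (f i :&: W)) f)
               (polytopal_ring k R (W :\: (f i :&: W)) f) ->
  subspace_neq (ehrhart_ring k R W f) (polytopal_ring k R W f).
Proof.
move=> [p hp]; exists p => H; apply: hp; move: H.
have sW : W :\: (f i :&: W) \subset W by apply: subsetDl.
apply: (@transfer _ _ _ _ _ _ (fun e : expo n => e.1 i == 0%N)).
- by move=> e; apply: dilate_mono.
- move=> e [s [h1 h2 h3]]; exists s; split => // x /h2; exact: dilate_mono.
- by move=> e h /eqP; move/dilate_face; apply.
- move=> e [s [h1 h2 h3]] /eqP e0; exists s; split => // x xs.
  apply: dilate_face (h2 _ xs); apply/eqP; rewrite -leqn0 -e0 h3.
  by rewrite (big_rem _ xs) /= leq_addr.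
- by move=> e /dilate_zero ->.
- move=> e [s [h1 h2 h3]]; rewrite h3; apply/eqP; apply: big1_seq => x /andP[_ xs].
  exact: dilate_zero (h2 _ xs).
Qed.

End Helpers.

Theorem theorem3p9 (k : fieldType) (R : realFieldType) (V : finType) (n : nat)
  (f : 'I_n -> {set V}) (W : {set V}) :
  separated [set: V] f ->
  is_minor f [set: V] W ->
  subspace_neq (ehrhart_ring k R W f) (polytopal_ring k R W f) ->
  subspace_neq (ehrhart_ring k R [set: V] f) (polytopal_ring k R [set: V] f).
Proof.
move=> _; elim=> [//|W' i _ IH _ H]; apply: IH; exact: step H.
Qed.
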